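(* Let $\mathbb{C}$ be a majority category with finite products, $n\geqslant 3$, and $R$ a subobject of $A_1\times A_2\times\cdots\times A_n$. Let $a_k:S\to A_k$ ($k=1,\dots,n$), $x:S\to A_1$, $y:S\to A_2$, $z:S\to A_3$ be morphisms. If $(x,a_2,a_3,\dots,a_n)\in_S R$, $(a_1,y,a_3,\dots,a_n)\in_S R$ and $(a_1,a_2,z,a_4,\dots,a_n)\in_S R$, then $(a_1,a_2,a_3,\dots,a_n)\in_S R$.
   Context: For a morphism $w:S\to W$ and a subobject $A$ of $W$, $w\in_S A$ means $w$ factors through a (any) mono representing $A$. A ternary relation $R\leqslant X\times Y\times Z$ is majority-selecting if for all $S$ and $x,x':S\to X$, $y,y':S\to Y$, $z,z':S\to Z$: $(x,y,z')\in_S R$, $(x,y',z)\in_S R$, $(x',y,z)\in_S R$ imply $(x,y,z)\in_S R$. A category with products is a majority category if every ternary relation (subobject of a product of three objects) is majority-selecting. *)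

(* Defs.v *)
From mathcomp Require Import all_boot.
Set Implicit Arguments.
Unset Strict Implicit.
Unset Printing Implicit Defensive.

Record category := Category {
  Ob :> Type;
  Hom : Ob -> Ob -> Type;
  idm : forall A, Hom A A;
  comp : forall A B C, Hom B C -> Hom A B -> Hom A C;
  comp_assoc : forall A B C D (h : Hom C D) (g : Hom B C) (f : Hom A B),
      comp h (comp g f) = comp (comp h g) f;
  comp_id_l : forall A B (f : Hom A B), comp (idm B) f = f;
  comp_id_r : forall A B (f : Hom A B), comp f (idm A) = f
}.
Arguments Hom {c}.
Arguments idm {c}.
Arguments comp {c A B C}.

Record finite_products (C : category) := FiniteProducts {
  prod : forall n, ('I_n -> C) -> C;
  proj : forall n (A : 'I_n -> C) (i : 'I_n), Hom (prod A) (A i);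
  ptuple : forall n (A : 'I_n -> C) (S : C), (forall i, Hom S (A i)) -> Hom S (prod A);
  proj_tuple : forall n (A : 'I_n -> C) S (f : forall i, Hom S (A i)) i,
      comp (proj A i) (ptuple f) = f i;
  tuple_unique : forall n (A : 'I_n -> C) S (f : forall i, Hom S (A i)) (g : Hom S (prod A)),
      (forall i, comp (proj A i) g = f i) -> g = ptuple f
}.
Arguments prod {C} _ {n}.
Arguments proj {C} _ {n} A i.
Arguments ptuple {C} _ {n A S}.

Definition mono (C : category) (A B : C) (m : Hom A B) : Prop :=
  forall S (g h : Hom S A), comp m g = comp m h -> g = h.

Record subobject (C : category) (W : C) := Subobject {
  sub_dom : C;
  sub_arr : Hom sub_dom W;
  sub_mono : mono sub_arr
}.

(* w \in_S R : w factors through the representing mono of R. *)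
Definition mem_at (C : category) (S W : C) (w : Hom S W) (R : subobject W) : Prop :=
  exists h : Hom S (sub_dom R), comp (sub_arr R) h = w.

(* A ternary relation R <= A 0 x A 1 x A 2 is majority-selecting.  The triple
   (x,y,z) is a : forall i : 'I_3, Hom S (A i); (x,y,z') is a with the
   entry 2 replaced by z', etc. *)
Definition majority_selecting (C : category) (P : finite_products C)
    (A : 'I_3 -> C) (R : subobject (prod P A)) : Prop :=
  forall (S : C) (a : forall i : 'I_3, Hom S (A i))
         (x' : Hom S (A ord0)) (y' : Hom S (A (inord 1))) (z' : Hom S (A (inord 2))),
    mem_at (ptuple P (dfwith a z')) R ->
    mem_at (ptuple P (dfwith a y')) R ->
    mem_at (ptuple P (dfwith a x')) R ->
    mem_at (ptuple P a) R.

Definition majority_category (C : category) (P : finite_products C) : Prop :=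
  forall (A : 'I_3 -> C) (R : subobject (prod P A)), majority_selecting R.

(* Main.v *)
Require Import Defs.
From mathcomp Require Import all_boot.
From mathcomp Require Import zify.
Set Implicit Arguments.
Unset Strict Implicit.
Local Notation comp := Defs.comp.

Lemma gI_lt n (j : 'I_(n-2)) : j + 2 < n.
Proof. have := ltn_ord j; lia. Qed.

Definition gI n (j : 'I_(n-2)) : 'I_n := Ordinal (gI_lt j).

Definition B3 (C : category) (A1 A2 Br : C) : 'I_3 -> C :=
  fun i => match val i with 0 => A1 | 1 => A2 | _ => Br end.

Definition tr3 (C : category) (X A1 A2 Br : C) (f1 : Hom X A1) (f2 : Hom X A2)
  (f3 : Hom X Br) : forall i, Hom X (B3 A1 A2 Br i) :=
  fun i => match val i as v return
              Hom X (match v with 0 => A1 | 1 => A2 | _ => Br end) with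
           | 0 => f1 | 1 => f2 | _ => f3 end.

Theorem lemma5p6 (C : category) (P : finite_products C) (HC : majority_category P)
  (n : nat) (hn : 3 <= n) (A : 'I_n -> C) (R : subobject (prod P A))
  (i1 i2 i3 : 'I_n) (hi1 : nat_of_ord i1 = 0) (hi2 : nat_of_ord i2 = 1)
  (hi3 : nat_of_ord i3 = 2)
  (S : C) (a : forall k : 'I_n, Hom S (A k))
  (x : Hom S (A i1)) (y : Hom S (A i2)) (z : Hom S (A i3)) :
  mem_at (ptuple P (dfwith a x)) R ->
  mem_at (ptuple P (dfwith a y)) R ->
  mem_at (ptuple P (dfwith a z)) R ->
  mem_at (ptuple P a) R.
Proof.
move=> Hx Hy Hz.
pose Ar := fun j : 'I_(n-2) => A (gI j).
pose Br := prod P Ar.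
pose B := B3 (A i1) (A i2) Br.
pose tr X (c : forall k, Hom X (A k)) : forall i, Hom X (B i) :=
  tr3 (c i1) (c i2) (ptuple P (fun j => c (gI j))).
pose r := sub_arr R.
pose D := sub_dom R.
pose m : Hom D (prod P B) := ptuple P (tr D (fun k => comp (proj P A k) r)).
have F1 : forall X (h : Hom X D) c, comp r h = ptuple P c -> comp m h = ptuple P (tr X c).
  move=> X h c hr; apply: tuple_unique => -[[|[|k]] Hk];
    rewrite comp_assoc proj_tuple /=.
  - by rewrite -comp_assoc hr proj_tuple.
  - by rewrite -comp_assoc hr proj_tuple.
  - apply: tuple_unique => j.
    by rewrite comp_assoc proj_tuple -comp_assoc hr proj_tuple.
have F2 : forall X (h : Hom X D) c, comp m h = ptuple P (tr X c) -> comp r h = ptuple P c.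
  move=> X h c hm; apply: tuple_unique => k.
  have e : forall i, comp (proj P B i) (comp m h) = comp (proj P B i) (ptuple P (tr X c)).
    by move=> i; rewrite hm.
  case: k => -[|[|kk]] Hk.
  - have ek : Ordinal Hk = i1 by apply: val_inj; rewrite /= hi1.
    rewrite ek.
    have := e (@Ordinal 3 0 isT).
    by rewrite comp_assoc !proj_tuple /= -comp_assoc.
  - have ek : Ordinal Hk = i2 by apply: val_inj; rewrite /= hi2.
    rewrite ek.
    have := e (@Ordinal 3 1 isT).
    by rewrite comp_assoc !proj_tuple /= -comp_assoc.
  - have Hj : kk < n - 2 by lia.
    have ek : Ordinal Hk = gI (Ordinal Hj) by apply: val_inj; rewrite /= addn2.
    rewrite ek.
    have := e (@Ordinal 3 2 isT).
    rewrite comp_assoc !proj_tuple /tr /tr3 /= => e2.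
    have := f_equal (comp (proj P Ar (Ordinal Hj))) e2.
    move=> e3; rewrite comp_assoc proj_tuple in e3. by rewrite comp_assoc e3 proj_tuple.
have mm : mono m.
  move=> Y h h' E; apply: (sub_mono (s := R)).
  pose c := fun k => comp (proj P A k) (comp r h').
  have hr' : comp r h' = ptuple P c by apply: tuple_unique.
  rewrite hr'; apply: F2; rewrite E; exact: F1.
pose R' := Subobject mm.
have G1 : forall c, mem_at (ptuple P c) R -> mem_at (ptuple P (tr S c)) R'.
  by move=> c [h hh]; exists h; apply: F1.
have G2 : forall c, mem_at (ptuple P (tr S c)) R' -> mem_at (ptuple P c) R.
  by move=> c [h hh]; exists h; apply: F2.
have ptE : forall (F G : forall i, Hom S (B i)), (forall i, F i = G i) ->
    ptuple P F = ptuple P G.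
  by move=> F G FG; apply: tuple_unique => i; rewrite proj_tuple.
apply: G2.
have i12 : i1 != i2 by rewrite -val_eqE /= hi1 hi2.
have i13 : i1 != i3 by rewrite -val_eqE /= hi1 hi3.
have i23 : i2 != i3 by rewrite -val_eqE /= hi2 hi3.
have gn1 : forall j, i1 != gI j by move=> j; rewrite -val_eqE /= hi1 addn2.
have gn2 : forall j, i2 != gI j by move=> j; rewrite -val_eqE /= hi2 addn2.
pose z' : Hom S Br := ptuple P (fun j => dfwith a z (gI j)).
have e1 : (@Ordinal 3 1 isT) = inord 1 by apply: val_inj; rewrite /= inordK.
have e2 : (@Ordinal 3 2 isT) = inord 2 by apply: val_inj; rewrite /= inordK.
pose cst := fun (i j : 'I_3) (e : i = j) (f : Hom S (B i)) =>
  match e in _ = j' return Hom S (B j') with erefl => f end.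
apply: (HC B R' S (tr S a) x (cst _ _ e1 y) (cst _ _ e2 z')).
- rewrite (ptE _ (tr S (dfwith a z))); first exact: G1.
  move=> i; case: dfwithP.
  + rewrite /cst; move: (inord 2 : 'I_3) e2 => i0 e0; case: i0 / e0.
    by rewrite /tr /tr3 /=.
  + case=> -[|[|[|k]]] Hk Hne //; rewrite /tr /tr3 /=.
    * by rewrite dfwith_out // eq_sym.
    * by rewrite dfwith_out // eq_sym.
    * by rewrite -val_eqE /= inordK in Hne.
- rewrite (ptE _ (tr S (dfwith a y))); first exact: G1.
  move=> i; case: dfwithP.
  + rewrite /cst; move: (inord 1 : 'I_3) e1 => i0 e0; case: i0 / e0.
    by rewrite /tr /tr3 /= dfwith_in.
  + case=> -[|[|[|k]]] Hk Hne //; rewrite /tr /tr3 /=.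
    * by rewrite dfwith_out // eq_sym.
    * by rewrite -val_eqE /= inordK in Hne.
    * apply: tuple_unique => j; rewrite proj_tuple.
      by rewrite dfwith_out // gn2.
- rewrite (ptE _ (tr S (dfwith a x))); first exact: G1.
  move=> i; case: dfwithP.
  + by rewrite /tr /tr3 /= dfwith_in.
  + case=> -[|[|[|k]]] Hk Hne //; rewrite /tr /tr3 /=.
    * by rewrite dfwith_out.
    * apply: tuple_unique => j; rewrite proj_tuple.
      by rewrite dfwith_out // gn1.
Qed.
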